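(* Any quantum oracle algorithm that solves $\mathsf{EL\text{-}LCS\text{-}RLE}$ with probability at least $2/3$ requires $\tilde\Omega(n)$ queries, where $n$ is the encoded length of the inputs.
   Context: A string $\tilde s$ has run-length encoding (RLE) $s=s[1]\cdots s[m]$, its sequence of maximal runs of identical characters, each run having character $C(s[i])$ and length $R(s[i])$; $|s|=m$ is the encoded length. The problem $\mathsf{EL\text{-}LCS\text{-}RLE}$: given quantum oracle access to two RLE strings $A$ and $B$ only through the unitaries $|i\rangle|c\rangle|r\rangle\mapsto|i\rangle|c\oplus C(S[i])\rangle|r\oplus R(S[i])\rangle$ for $S\in\{A,B\}$ (no prefix-sum oracle), compute $|s|$ for an RLE string $s$ such that $\tilde s$ is a longest common substring of $\tilde A$ and $\tilde B$. $\tilde\Omega(\cdot)$ hides polylogarithmic factors. *)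

(* Defs.v *)
From mathcomp Require Import all_boot all_order all_algebra algC.
Set Implicit Arguments. Unset Strict Implicit. Unset Printing Implicit Defensive.
Import Order.TTheory GRing.Theory Num.Theory.

Definition bits (b : nat) := {ffun 'I_b -> bool}.
Definition bval (b : nat) (f : bits b) : nat := \sum_(i < b) (f i : nat) * 2 ^ i.
Definition bxor (b : nat) (f g : bits b) : bits b := [ffun j => f j (+) g j].
Definition bzero (b : nat) : bits b := [ffun => false].

(* An RLE string over alphabet bits bc, run lengths stored in br bits:
   a sequence of runs (character, length). *)
Definition rle_str (bc br : nat) := seq (bits bc * bits br).

(* s is the RLE of some string: every run has positive length and
   consecutive runs have different characters (maximality of runs). *)
Definition valid_rle (bc br : nat) (s : rle_str bc br) : bool :=
  all (fun p => 0 < bval p.2) s && sorted (fun p q => p.1 != q.1) s.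

Definition decode (bc br : nat) (s : rle_str bc br) : seq (bits bc) :=
  flatten [seq nseq (bval p.2) p.1 | p <- s].

Fixpoint rle (T : eqType) (t : seq T) : seq (T * nat) :=
  match t with
  | [::] => [::]
  | x :: t' =>
    match rle t' with
    | (y, k) :: r => if x == y then (y, k.+1) :: r else (x, 1) :: (y, k) :: r
    | [::] => [:: (x, 1)]
    end
  end.

Definition ellcs_answer (bc br : nat) (A B : rle_str bc br) (a : nat) : Prop :=
  exists t : seq (bits bc),
    [/\ infix t (decode A), infix t (decode B),
        (forall u, infix u (decode A) -> infix u (decode B) -> size u <= size t)
      & a = size (rle t)].

Local Open Scope ring_scope.

(* Basis of the state space: query register |S>|i>|c>|r> (S : bool selects
   A (false) or B (true), i : 'I_n a position, c, r registers of bc and br bits)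
   together with a workspace register 'I_w. *)
Definition qreg (n bc br : nat) := (bool * 'I_n * bits bc * bits br)%type.
Definition qbasis (n bc br w : nat) := (qreg n bc br * 'I_w)%type.

Definition qvec (X : finType) := X -> algC.
Definition qop (X : finType) := X -> X -> algC.

Definition qapply (X : finType) (U : qop X) (v : qvec X) : qvec X :=
  fun x => \sum_(y : X) U x y * v y.

Definition unit_vec (X : finType) (v : qvec X) : Prop :=
  \sum_(x : X) `|v x| ^+ 2 = 1.

Definition unitary (X : finType) (U : qop X) : Prop :=
  forall y y' : X, \sum_(x : X) (U x y)^* * U x y' = (y == y')%:R.

Definition oracle_map (n bc br w : nat) (A B : rle_str bc br)
  (q : qbasis n bc br w) : qbasis n bc br w :=
  let: ((sel, i, c, r), z) := q in
  let p := nth (bzero bc, bzero br) (if sel then B else A) i in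
  ((sel, i, bxor c p.1, bxor r p.2), z).

Definition oracle (n bc br w : nat) (A B : rle_str bc br) : qop (qbasis n bc br w) :=
  fun x y => ((x == oracle_map A B y) : nat)%:R.

Fixpoint qstate (X : finType) (O : qop X) (psi0 : qvec X) (U : nat -> qop X)
  (t : nat) : qvec X :=
  match t with
  | 0 => qapply (U 0) psi0
  | t'.+1 => qapply (U t) (qapply O (qstate O psi0 U t'))
  end.

Definition solves_ellcs (n bc br w T : nat) (psi0 : qvec (qbasis n bc br w))
  (U : nat -> qop (qbasis n bc br w)) (out : qbasis n bc br w -> nat) : Prop :=
  forall A B : rle_str bc br,
    valid_rle A -> valid_rle B -> size A = n -> size B = n ->
    forall good : pred nat, (forall a, good a <-> ellcs_answer A B a) ->
      2%:R / 3%:R <= \sum_(x | good (out x))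
                        `|qstate (oracle A B) psi0 U T x| ^+ 2 :> algC.

(* Main.v *)
Require Import Defs.
From mathcomp Require Import all_boot all_order all_algebra algC.
From mathcomp Require Import ring zify.
Set Implicit Arguments. Unset Strict Implicit. Unset Printing Implicit Defensive.
Import Order.TTheory GRing.Theory Num.Theory.

Local Open Scope ring_scope.

Definition inner (X : finType) (a b : qvec X) : algC := \sum_x (a x)^* * b x.
Definition loc (X : finType) (pos : X -> nat) (a : qvec X) (i : nat) : algC :=
  \sum_(x | pos x == i) `|a x| ^+ 2.
Definition permop (X : finType) (f : X -> X) : qop X := fun x y => ((x == f y) : nat)%:R.

Lemma inner_unitary (X : finType) (U : qop X) a b :
  unitary U -> inner (qapply U a) (qapply U b) = inner a b.
Proof.
move=> HU; rewrite /inner /qapply.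
transitivity (\sum_x \sum_y \sum_y' (U x y * a y)^* * (U x y' * b y')).
  apply: eq_bigr => x _; rewrite rmorph_sum /= mulr_suml.
  by apply: eq_bigr => y _; rewrite mulr_sumr.
rewrite exchange_big /=.
apply: eq_bigr => y _; rewrite exchange_big /=.
rewrite (bigD1 y) //= [X in _ + X]big1 ?addr0.
  transitivity ((a y)^* * b y * \sum_x (U x y)^* * U x y).
    rewrite mulr_sumr; apply: eq_bigr => x _; rewrite rmorphM /=; ring.
  by rewrite HU eqxx mulr1.
move=> y' /negbTE ny.
transitivity ((a y)^* * b y' * \sum_x (U x y)^* * U x y').
  rewrite mulr_sumr; apply: eq_bigr => x _; rewrite rmorphM /=; ring.
by rewrite HU eq_sym ny mulr0.
Qed.

Lemma qapply_perm (X : finType) (f : X -> X) (a : qvec X) x :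
  involutive f -> qapply (permop f) a x = a (f x).
Proof.
move=> fK; rewrite /qapply /permop (bigD1 (f x)) //= fK eqxx mul1r big1 ?addr0 //.
move=> y ny; case: eqP => [E|]; last by rewrite mul0r.
by move: ny; rewrite E fK eqxx.
Qed.

Lemma sum_inv (X : finType) (f : X -> X) (P : pred X) (F : X -> algC) :
  involutive f -> (forall x, P (f x) = P x) ->
  \sum_(x | P x) F (f x) = \sum_(x | P x) F x.
Proof.
move=> fK Pf; rewrite [RHS](reindex_inj (can_inj fK)) /=.
by apply: eq_bigl => x; rewrite Pf.
Qed.

Lemma inner_perm (X : finType) (f : X -> X) a b :
  involutive f -> inner (qapply (permop f) a) (qapply (permop f) b) = inner a b.
Proof.
move=> fK; rewrite /inner.
under eq_bigr => x _ do rewrite !qapply_perm //.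
by rewrite (@sum_inv _ f predT (fun x => (a x)^* * b x)).
Qed.

Lemma inner_self (X : finType) (a : qvec X) : inner a a = \sum_x `|a x| ^+ 2.
Proof. by apply: eq_bigr => x _; rewrite normCK mulrC. Qed.

Lemma amgm (u v : algC) (al be : nat) : u \is Num.real -> v \is Num.real ->
  (2 * al * be)%:R * (u * v) <= (al * al)%:R * u ^+ 2 + (be * be)%:R * v ^+ 2.
Proof.
move=> ur vr.
have r : al%:R * u - be%:R * v \is Num.real by rewrite rpredB // rpredM // realn.
have h : 0 <= (al%:R * u - be%:R * v) ^+ 2 by rewrite -real_normK // exprn_ge0.
rewrite -subr_ge0; apply: le_trans h _; rewrite le_eqVlt; apply/orP; left.
apply/eqP; rewrite !natrM; ring.
Qed.

Lemma amgm1 (u v : algC) : 2%:R * (`|u| * `|v|) <= `|u| ^+ 2 + `|v| ^+ 2.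
Proof.
by have := amgm 1 1 (normr_real u) (normr_real v); rewrite !mul1r.
Qed.

Lemma local_diff (X : finType) (fx fy : X -> X) (pos : X -> nat) (i : nat) (a b : qvec X) :
  involutive fx -> involutive fy ->
  (forall q, pos (fx q) = pos q) -> (forall q, pos (fy q) = pos q) ->
  (forall q, pos q != i -> fx q = fy q) ->
  `|inner a b| - (loc pos a i + loc pos b i) <=
  `|inner (qapply (permop fx) a) (qapply (permop fy) b)|.
Proof.
move=> fxK fyK px py loc_eq.
set D := inner (qapply (permop fx) a) (qapply (permop fy) b) - inner a b.
have ED : D = \sum_(q | pos q == i) (a (fx q))^* * b (fy q)
              - \sum_(q | pos q == i) (a q)^* * b q.
  rewrite /D /inner.
  under eq_bigr => q _ do rewrite !qapply_perm //.
  rewrite (bigID (fun q => pos q == i)) [X in _ - X](bigID (fun q => pos q == i)) /=.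
  have -> : \sum_(q | pos q != i) (a (fx q))^* * b (fy q) =
            \sum_(q | pos q != i) (a q)^* * b q.
    rewrite -(@sum_inv _ fx (fun q => pos q != i) (fun q => (a q)^* * b q)) //.
      by apply: eq_bigr => q /loc_eq ->.
    by move=> q; rewrite px.
  ring.
have HD : `|D| <= loc pos a i + loc pos b i.
  rewrite ED; apply: le_trans (ler_normB _ _) _.
  rewrite -(@ler_pM2l _ 2%:R) // mulrDr.
  have H1 : 2%:R * `|\sum_(q | pos q == i) (a (fx q))^* * b (fy q)| <=
            loc pos a i + loc pos b i.
    apply: (le_trans (y := 2%:R * \sum_(q | pos q == i) `|a (fx q)| * `|b (fy q)|)).
      rewrite ler_pM2l //; apply: le_trans (ler_norm_sum _ _ _) _.
      by apply: ler_sum => q _; rewrite normrM norm_conjC.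
    rewrite mulr_sumr.
    apply: le_trans (ler_sum _ (fun q _ => amgm1 (a (fx q)) (b (fy q)))) _.
    rewrite big_split /= /loc.
    have Px : forall q, (pos (fx q) == i) = (pos q == i) by move=> q; rewrite px.
    have Py : forall q, (pos (fy q) == i) = (pos q == i) by move=> q; rewrite py.
    rewrite (@sum_inv _ fx (fun q => pos q == i) (fun q => `|a q| ^+ 2) fxK Px).
    by rewrite (@sum_inv _ fy (fun q => pos q == i) (fun q => `|b q| ^+ 2) fyK Py).
  have H2 : 2%:R * `|\sum_(q | pos q == i) (a q)^* * b q| <=
            loc pos a i + loc pos b i.
    apply: (le_trans (y := 2%:R * \sum_(q | pos q == i) `|a q| * `|b q|)).
      rewrite ler_pM2l //; apply: le_trans (ler_norm_sum _ _ _) _.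
      by apply: ler_sum => q _; rewrite normrM norm_conjC.
    rewrite mulr_sumr.
    apply: le_trans (ler_sum _ (fun q _ => amgm1 (a q) (b q))) _.
    by rewrite big_split /= /loc.
  rewrite [X in _ <= X]mulr_natl mulr2n; exact: lerD.
have := lerB_normD (inner a b) D.
have -> : inner a b + D = inner (qapply (permop fx) a) (qapply (permop fy) b) by rewrite /D; ring.
move=> H.
apply: le_trans H; rewrite lerD2l lerN2 //.
Qed.

Local Close Scope ring_scope.

Definition bvec (m : nat) := {ffun 'I_m -> bool}.
Definition flip (m : nat) (x : bvec m) (i : 'I_m) : bvec m :=
  [ffun j => if j == i then ~~ x j else x j].
Definition wt (m : nat) (x : bvec m) : nat := \sum_(j < m) (x j : nat).

Lemma flip_at m (x : bvec m) i : flip x i i = ~~ x i.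
Proof. by rewrite /flip ffunE eqxx. Qed.

Lemma flipK m (x : bvec m) i : flip (flip x i) i = x.
Proof.
apply/ffunP => j; rewrite /flip !ffunE; case: eqP => [->|//]; by rewrite negbK.
Qed.

Lemma wt_flip m (x : bvec m) i : ~~ x i -> wt (flip x i) = (wt x).+1.
Proof.
move=> xi; rewrite /wt (bigD1 i) //= [in RHS](bigD1 i) //= flip_at (negbTE xi) /=.
congr (_ + _)%N; apply: eq_bigr => j nj; by rewrite /flip ffunE (negbTE nj).
Qed.

Lemma flip_reindex (R : Type) (idx : R) (op : Monoid.com_law idx) m k
  (G : bvec m -> 'I_m -> R) :
  \big[op/idx]_(x | wt x == k) \big[op/idx]_(i | ~~ x i) G (flip x i) i =
  \big[op/idx]_(y | wt y == k.+1) \big[op/idx]_(i | y i) G y i.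
Proof.
rewrite !pair_big_dep.
pose h := fun p : bvec m * 'I_m => (flip p.1 p.2, p.2).
have hK : involutive h by case=> x i; rewrite /h /= flipK.
rewrite [RHS](reindex_inj (can_inj hK)) /=.
apply: eq_big => [[x i]|[x i] _] //=.
rewrite flip_at; case xi: (x i); first by rewrite !andbF.
by rewrite !andbT wt_flip ?xi // eqSS.
Qed.

Lemma count_neg m (x : bvec m) : (\sum_(i | ~~ x i) 1 = m - wt x)%N.
Proof.
have H : (\sum_(i < m) (x i : nat) + \sum_(i < m) (~~ x i : nat) = #|'I_m|)%N.
  rewrite -big_split /= -sum1_card; apply: eq_bigr => i _.
  by case: (x i).
rewrite card_ord in H.
have -> : (\sum_(i | ~~ x i) 1 = \sum_(i < m) (~~ x i : nat))%N.
  by rewrite big_mkcond; apply: eq_bigr => i _; case: (x i).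
rewrite /wt; move: H.
set a := (\sum_(i < m) (x i : nat))%N; set b := (\sum_(i < m) (~~ x i : nat))%N.
lia.
Qed.

Lemma count_pos m (x : bvec m) : (\sum_(i | x i) 1 = wt x)%N.
Proof. by rewrite /wt big_mkcond; apply: eq_bigr => i _; case: (x i). Qed.

Lemma wt_init m k : (k <= m)%N -> wt ([ffun j : 'I_m => (j < k)%N]) = k.
Proof.
move=> km; rewrite /wt.
have : forall m', (m' <= m)%N -> (\sum_(j < m') ((j < k)%N : nat) = minn m' k)%N.
  elim=> [|m' IH] lm; first by rewrite big_ord0 min0n.
  rewrite big_ord_recr /= IH; last by apply: ltnW.
  case: (ltnP m' k) => h /=; lia.
move=> /(_ m (leqnn m)) H.
rewrite -[RHS](_ : minn m k = k); last by lia.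
rewrite -H; by apply: eq_bigr => j _; rewrite ffunE.
Qed.

Local Open Scope ring_scope.

Lemma norm_state (X : finType) (f : X -> X) psi0 (U : nat -> qop X) T t :
  involutive f -> unit_vec psi0 -> (forall t, (t <= T)%N -> unitary (U t)) ->
  (t <= T)%N -> inner (qstate (permop f) psi0 U t) (qstate (permop f) psi0 U t) = 1.
Proof.
move=> fK u0 HU; elim: t => [|t IH] tT /=.
  by rewrite inner_unitary ?inner_self //; apply: HU.
by rewrite inner_unitary ?inner_perm ?IH //; [exact: ltnW | apply: HU].
Qed.

Lemma locsum (X : finType) (pos : X -> nat) (a : qvec X) m :
  \sum_(i < m) loc pos a i <= \sum_q `|a q| ^+ 2.
Proof.
rewrite /loc.
under eq_bigr => i _ do rewrite big_mkcond /=.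
rewrite exchange_big /=; apply: ler_sum => q _.
case: (ltnP (pos q) m) => h.
  rewrite (bigD1 (Ordinal h)) //= eqxx big1 ?addr0 // => j nj.
  case: eqP => // E; case/eqP: nj; apply: val_inj => /=; by rewrite E.
rewrite big1 ?exprn_ge0 // => j _; case: eqP => // E.
by move: (ltn_ord j); rewrite -E ltnNge h.
Qed.

Lemma sum_sub_le (X : finType) (P Q : pred X) (g : X -> algC) :
  (forall q, 0 <= g q) -> (forall q, P q -> Q q) ->
  \sum_(q | P q) g q <= \sum_(q | Q q) g q.
Proof.
move=> g0 PQ; rewrite [X in X <= _]big_mkcond [X in _ <= X]big_mkcond.
apply: ler_sum => q _; case Pq: (P q); first by rewrite PQ.
by case: (Q q).
Qed.

Lemma final_bound (X : finType) (a b : qvec X) (S S1 : pred X) :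
  \sum_q `|a q| ^+ 2 = 1 -> \sum_q `|b q| ^+ 2 = 1 ->
  (forall q, S1 q -> ~~ S q) ->
  2%:R / 3%:R <= \sum_(q | S q) `|a q| ^+ 2 ->
  2%:R / 3%:R <= \sum_(q | S1 q) `|b q| ^+ 2 ->
  18%:R * `|inner a b| <= 17%:R.
Proof.
move=> na nb S1S.
rewrite !ler_pdivrMr ?ltr0n // => pa pb1.
set pa' := \sum_(q | S q) `|a q| ^+ 2 in pa.
set qb := \sum_(q | S q) `|b q| ^+ 2.
have ea : pa' + \sum_(q | ~~ S q) `|a q| ^+ 2 = 1 by rewrite -na [in RHS](bigID S).
have eb : qb + \sum_(q | ~~ S q) `|b q| ^+ 2 = 1 by rewrite -nb [in RHS](bigID S).
have hb : \sum_(q | S1 q) `|b q| ^+ 2 <= \sum_(q | ~~ S q) `|b q| ^+ 2.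
  by apply: sum_sub_le => // q; rewrite exprn_ge0.
have H1 : 12%:R * `|inner a b| <= \sum_q 12%:R * (`|a q| * `|b q|).
  rewrite -mulr_sumr ler_pM2l ?ltr0n //; apply: le_trans (ler_norm_sum _ _ _) _.
  by apply: ler_sum => q _; rewrite normrM norm_conjC.
have H2 : \sum_q 12%:R * (`|a q| * `|b q|) <=
   (4%:R * pa' + 9%:R * qb) + (9%:R * \sum_(q | ~~ S q) `|a q| ^+ 2 + 4%:R * \sum_(q | ~~ S q) `|b q| ^+ 2).
  rewrite (bigID S) /=; apply: lerD.
    rewrite /pa' /qb !mulr_sumr -big_split /=; apply: ler_sum => q _.
    exact: (amgm 2 3 (normr_real _) (normr_real _)).
  rewrite !mulr_sumr -big_split /=; apply: ler_sum => q _.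
  exact: (amgm 3 2 (normr_real _) (normr_real _)).
have H3 : 12%:R * `|inner a b| <= 13%:R - 5%:R * pa' + 5%:R * qb.
  apply: le_trans H1 _; apply: le_trans H2 _.
  have -> : \sum_(q | ~~ S q) `|a q| ^+ 2 = 1 - pa' by rewrite -ea; ring.
  have -> : \sum_(q | ~~ S q) `|b q| ^+ 2 = 1 - qb by rewrite -eb; ring.
  rewrite le_eqVlt; apply/orP; left; apply/eqP; ring.
have hq : 3%:R * qb <= 1.
  have : \sum_(q | S1 q) `|b q| ^+ 2 <= 1 - qb by rewrite -eb; apply: le_trans hb _; rewrite addrC addKr.
  move=> h; rewrite -subr_ge0.
  have -> : 1 - 3%:R * qb = 3%:R * (1 - qb - \sum_(q | S1 q) `|b q| ^+ 2) + (3%:R * \sum_(q | S1 q) `|b q| ^+ 2 - 2%:R) by ring.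
  apply: addr_ge0; first by rewrite mulr_ge0 ?ler0n // subr_ge0.
  by rewrite subr_ge0 mulrC.
rewrite -(@ler_pM2l _ 2%:R) ?ltr0n //; rewrite mulrA -natrM.
apply: (le_trans (y := 3%:R * (13%:R - 5%:R * pa' + 5%:R * qb))).
  rewrite (_ : (2 * 18)%N = (3 * 12)%N) // natrM -mulrA ler_pM2l ?ltr0n //.
rewrite -subr_ge0.
have -> : 2%:R * 17%:R - 3%:R * (13%:R - 5%:R * pa' + 5%:R * qb) =
          5%:R * (pa' * 3%:R - 2%:R) + 5%:R * (1 - 3%:R * qb) by ring.
by apply: addr_ge0; rewrite mulr_ge0 ?ler0n // subr_ge0.
Qed.

Lemma adversary (X : finType) m k (F : bvec m -> X -> X) (pos : X -> nat)
  (psi0 : qvec X) (U : nat -> qop X) T (out : X -> nat) (good0 good1 : pred nat) :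
  (forall x, involutive (F x)) -> (forall x q, pos (F x q) = pos q) ->
  (forall x (i : 'I_m) q, pos q != i -> F x q = F (flip x i) q) ->
  unit_vec psi0 -> (forall t, (t <= T)%N -> unitary (U t)) ->
  (forall a, good0 a -> good1 a -> False) ->
  (forall x, wt x = k -> 2%:R / 3%:R <=
      \sum_(q | good0 (out q)) `|qstate (permop (F x)) psi0 U T q| ^+ 2) ->
  (forall x, wt x = k.+1 -> 2%:R / 3%:R <=
      \sum_(q | good1 (out q)) `|qstate (permop (F x)) psi0 U T q| ^+ 2) ->
  (k < m)%N ->
  ((m - k) * k.+1 <= 18 * T * ((m - k) + k.+1))%N.
Proof.
move=> FK Fpos Floc u0 HU g01 s0 s1 km.
pose Phi := fun x t => qstate (permop (F x)) psi0 U t.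
have nrm : forall x t, (t <= T)%N -> \sum_q `|Phi x t q| ^+ 2 = 1.
  by move=> x t tT; rewrite -inner_self (norm_state (T := T)).
pose W := fun t => \sum_(x : bvec m | wt x == k) \sum_(i | ~~ x i) `|inner (Phi x t) (Phi (flip x i) t)|.
pose NP := (\sum_(x : bvec m | wt x == k) \sum_(i | ~~ x i) 1)%N.
pose Nk := (\sum_(x : bvec m | wt x == k) 1)%N.
pose Nk1 := (\sum_(x : bvec m | wt x == k.+1) 1)%N.
have W0 : W 0%N = NP%:R.
  rewrite /W /NP natr_sum; apply: eq_bigr => x _; rewrite natr_sum; apply: eq_bigr => i _.
  rewrite (_ : Phi (flip x i) 0%N = Phi x 0%N) //.
  by rewrite /Phi (norm_state (T := T)) // normr1.
have Wstep : forall t, (t < T)%N -> W t - (Nk + Nk1)%:R <= W t.+1.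
  move=> t tT.
  pose S := \sum_(x : bvec m | wt x == k) \sum_(i | ~~ x i)
              (loc pos (Phi x t) i + loc pos (Phi (flip x i) t) i).
  have A : W t - S <= W t.+1.
    rewrite /W /S -sumrB; apply: ler_sum => x _; rewrite -sumrB; apply: ler_sum => i _.
    rewrite /Phi /= inner_unitary; last by apply: HU.
    apply: local_diff => //; exact: Floc.
  apply: le_trans A; rewrite lerD2l lerN2.
  rewrite /S; under eq_bigr => x _ do rewrite big_split /=.
  rewrite big_split /= natrD; apply: lerD.
    rewrite /Nk natr_sum; apply: ler_sum => x _.
    apply: (le_trans (y := \sum_(i < m) loc pos (Phi x t) i)).
      apply: sum_sub_le => // i; rewrite /loc; apply: sumr_ge0 => q _; exact: exprn_ge0.
    apply: le_trans (locsum _ _ _) _; by rewrite nrm // ltnW.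
  rewrite (@flip_reindex _ _ _ m k (fun y i => loc pos (Phi y t) i)).
  rewrite /Nk1 natr_sum; apply: ler_sum => x _.
  apply: (le_trans (y := \sum_(i < m) loc pos (Phi x t) i)).
    apply: sum_sub_le => // i; rewrite /loc; apply: sumr_ge0 => q _; exact: exprn_ge0.
  apply: le_trans (locsum _ _ _) _; by rewrite nrm // ltnW.
have Wind : forall t, (t <= T)%N -> NP%:R - t%:R * (Nk + Nk1)%:R <= W t.
  elim=> [|t IH] tT; first by rewrite mul0r subr0 W0.
  apply: le_trans (Wstep t tT); idtac.
  have := IH (ltnW tT) => h.
  by rewrite -addn1 natrD mulrDl mul1r opprD addrA lerD2r.
have WT : 18%:R * W T <= 17%:R * NP%:R.
  rewrite /W /NP mulr_sumr natr_sum mulr_sumr; apply: ler_sum => x /eqP wx.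
  rewrite mulr_sumr natr_sum mulr_sumr; apply: ler_sum => i xi.
  rewrite mulr1.
  apply: (@final_bound _ _ _ (fun q => good0 (out q)) (fun q => good1 (out q))).
  - exact: nrm.
  - exact: nrm.
  - by move=> q g1; apply/negP => g0; exact: (g01 _ g0 g1).
  - exact: s0.
  - by apply: s1; rewrite wt_flip ?wx.
have key : (NP <= 18 * T * (Nk + Nk1))%N.
  rewrite -(ler_nat algC) !natrM.
  have h := Wind T (leqnn T).
  have h2 : 18%:R * (NP%:R - T%:R * (Nk + Nk1)%:R) <= 17%:R * (NP%:R : algC).
    by apply: le_trans WT; rewrite ler_pM2l ?ltr0n.
  rewrite -subr_ge0; rewrite -subr_ge0 in h2.
  have -> : 18%:R * T%:R * (Nk + Nk1)%:R - NP%:R =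
            17%:R * NP%:R - 18%:R * (NP%:R - T%:R * (Nk + Nk1)%:R) :> algC by ring.
  exact: h2.
have E1 : NP = (Nk * (m - k))%N.
  rewrite /NP /Nk big_distrl /=; apply: eq_bigr => x /eqP wx.
  by rewrite count_neg wx mul1n.
have E2 : NP = (Nk1 * k.+1)%N.
  rewrite /NP (@flip_reindex _ _ _ m k (fun _ _ => 1%N)) /Nk1 big_distrl /=.
  apply: eq_bigr => x /eqP wx; by rewrite count_pos wx mul1n.
have NP0 : (0 < NP)%N.
  pose x0 : bvec m := [ffun j : 'I_m => (j < k)%N].
  have wx0 : wt x0 == k by rewrite wt_init // ltnW.
  rewrite /NP (bigD1 x0) //= (bigD1 (Ordinal km)) //=.
  by rewrite /x0 ffunE /= ltnn.
rewrite -(leq_pmul2l NP0).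
set a := (m - k)%N; set b := k.+1.
apply: (@leq_trans (18 * T * (Nk + Nk1) * (a * b))).
  by rewrite leq_mul2r key orbT.
have e1 : (NP * b = Nk * a * b)%N by rewrite E1.
have e2 : (NP * a = Nk1 * b * a)%N by rewrite E2.
rewrite (_ : (NP * (18 * T * (a + b)) = 18 * T * (NP * a + NP * b))%N); last by ring.
rewrite e1 e2 (_ : (18 * T * (Nk + Nk1) * (a * b) = 18 * T * (Nk1 * b * a + Nk * a * b))%N) //.
ring.
Qed.

Local Close Scope ring_scope.


Lemma prefix_split (T : eqType) (c : T) s2 : forall (s1 u : seq T),
  prefix u (s1 ++ c :: s2) -> c \notin u -> prefix u s1.
Proof.
elim=> [|x s1 IH] [|y u] //=.
  by move=> /andP [/eqP -> _]; rewrite inE eqxx.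
move=> /andP [/eqP -> H]; rewrite inE negb_or => /andP [_ cu].
by rewrite eqxx (IH _ H cu).
Qed.

Lemma infix_split (T : eqType) (c : T) s2 : forall (s1 u : seq T),
  infix u (s1 ++ c :: s2) -> c \notin u -> infix u s1 \/ infix u s2.
Proof.
elim=> [|x s1 IH] u.
  rewrite /= => /orP [H|H] cu; last by right.
  by left; have := prefix_split (s1 := [::]) H cu; case: u {H cu}.
rewrite cat_cons infix_consl => /orP [H|H] cu.
  by left; apply: prefixW; exact: (prefix_split (s1 := x :: s1) H cu).
case: (IH _ H cu) => h; last by right.
by left; rewrite infix_consl h orbT.
Qed.

Lemma infix_size (T : eqType) (u s : seq T) : infix u s -> size u <= size s.
Proof. by case/infixP=> [p [q ->]]; rewrite !size_cat; lia. Qed.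

Lemma infix_size_eq (T : eqType) (u s : seq T) : infix u s -> size u = size s -> u = s.
Proof.
case/infixP=> [p [q ->]]; rewrite !size_cat => E.
have p0 : p = [::] by apply/nilP; rewrite /nilp; apply/eqP; lia.
have q0 : q = [::] by apply/nilP; rewrite /nilp; apply/eqP; lia.
by rewrite p0 q0 cats0.
Qed.

Lemma lcs_char (T : eqType) (R : seq T) (e f g : T) (L : nat) (t : seq T) :
  e \notin R -> e != f -> e != g -> size R != L ->
  [/\ infix t (R ++ e :: nseq L g), infix t (R ++ f :: nseq L g)
    & forall u, infix u (R ++ e :: nseq L g) -> infix u (R ++ f :: nseq L g) ->
         size u <= size t]
  <-> t = if L < size R then R else nseq L g.
Proof.
move=> eR ef eg RL.
have common : forall u, infix u (R ++ e :: nseq L g) -> infix u (R ++ f :: nseq L g) ->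
    infix u R \/ infix u (nseq L g).
  move=> u HA HB; apply: (infix_split HA); apply/negP => eu.
  have := mem_infix HB eu; rewrite mem_cat inE (negbTE eR) (negbTE ef) /=.
  by move/nseqP => [/eqP]; rewrite (negbTE eg).
have cR : infix R (R ++ e :: nseq L g) /\ infix R (R ++ f :: nseq L g).
  by split; apply: prefix_infix.
have cG : infix (nseq L g) (R ++ e :: nseq L g) /\ infix (nseq L g) (R ++ f :: nseq L g).
  by split; apply: infix_catl; apply: infix_trans (infix_cons _ _); apply: infix_refl.
split.
  case=> HA HB Hmax.
  have sR := Hmax _ cR.1 cR.2; have sG := Hmax _ cG.1 cG.2; rewrite size_nseq in sG.
  case: ifP => LR; case: (common _ HA HB) => H.
  - by have := infix_size H => hs; apply: infix_size_eq H _; lia.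
  - by move: (infix_size H); rewrite size_nseq; lia.
  - by move: (infix_size H) RL; lia.
  - by have := infix_size H; rewrite size_nseq => hs; apply: infix_size_eq H _; rewrite size_nseq; lia.
move=> ->; case: ifP => LR; split; try (by case: cR); try (by case: cG).
  move=> u HA HB; case: (common _ HA HB) => H; first exact: infix_size.
  by move: (infix_size H); rewrite size_nseq; lia.
move=> u HA HB; rewrite size_nseq; case: (common _ HA HB) => H.
  by move: (infix_size H) RL; lia.
by move: (infix_size H); rewrite size_nseq.
Qed.

Lemma rle_cons_head (T : eqType) (x : T) t : exists k r, rle (x :: t) = (x, k) :: r.
Proof.
rewrite /=; case: (rle t) => [|[y k] r]; first by exists 1, [::].
case: eqP => [->|_]; first by exists k.+1, r.
by exists 1, ((y, k) :: r).
Qed.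

Lemma size_rle_cons (T : eqType) (x : T) t :
  size (rle (x :: t)) = size (rle t) + (if t is y :: _ then x != y else true).
Proof.
case: t => [|y t] //=.
have [k [r E]] := rle_cons_head y t; rewrite /= in E; rewrite E.
by case: eqP => //= _; lia.
Qed.

Lemma size_rle_nseq (T : eqType) (x : T) k t :
  size (rle (nseq k.+1 x ++ t)) = size (rle t) + (if t is y :: _ then x != y else true).
Proof.
elim: k => [|k IH]; first by rewrite /= size_rle_cons.
by rewrite [nseq _ _]/= cat_cons size_rle_cons IH /= eqxx addn0.
Qed.

Lemma rle_size_gen (T : eqType) (s : seq (T * nat)) :
  all (fun p => 0 < p.2) s -> sorted (fun p q => p.1 != q.1) s ->
  size (rle (flatten [seq nseq p.2 p.1 | p <- s])) = size s.
Proof.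
elim: s => [|[x l] s IH] //= /andP [l0 As] Ss.
have Ss' : sorted (fun p q => p.1 != q.1) s by apply: path_sorted Ss.
case: l l0 Ss => [|l] // _ Ss.
rewrite size_rle_nseq IH //.
case: s As Ss Ss' {IH} => [|[y l'] s] //= /andP [l'0 _] /andP [xy _] _.
case: l' l'0 xy => [|l'] // _ /= xy.
by rewrite xy addn1.
Qed.

Lemma rle_decode (bc br : nat) (s : rle_str bc br) :
  valid_rle s -> size (rle (decode s)) = size s.
Proof.
case/andP=> As Ss.
have -> : decode s = flatten [seq nseq p.2 p.1 | p <- [seq (p.1, bval p.2) | p <- s]].
  by rewrite /decode -map_comp.
rewrite rle_size_gen ?size_map //.
  by rewrite all_map.
by rewrite sorted_map.
Qed.

Definition enc (b v : nat) : bits b := [ffun i : 'I_b => odd (v %/ 2 ^ i)].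

Lemma bval_enc b v : v < 2 ^ b -> bval (enc b v) = v.
Proof.
elim: b v => [|b IH] v hv.
  by rewrite /bval big_ord0; move: hv; rewrite expn0; case: v.
rewrite /bval big_ord_recl /= ffunE expn0 divn1 muln1.
have -> : \sum_(i < b) (enc b.+1 v (lift ord0 i) : nat) * 2 ^ (lift ord0 i) =
          2 * \sum_(i < b) (enc b (v %/ 2) i : nat) * 2 ^ i.
  rewrite big_distrr /=; apply: eq_bigr => i _.
  rewrite !ffunE /= /bump /= add1n expnS -divnMA; lia.
rewrite -/(bval (enc b (v %/ 2))) IH.
  by rewrite divn2 -[X in _ = X](odd_double_half v) -muln2; lia.
by rewrite ltn_divLR // -expnSr.
Qed.

Lemma enc_neq b u v : u < 2 ^ b -> v < 2 ^ b -> u != v -> enc b u != enc b v.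
Proof.
move=> hu hv uv; apply/eqP => E; have := congr1 (@bval b) E.
by rewrite !bval_enc //; apply/eqP.
Qed.

Lemma valid_mkseq bc br (h : nat -> bits bc * bits br) N :
  (forall j, j < N -> 0 < bval (h j).2) ->
  (forall j, j.+1 < N -> (h j).1 != (h j.+1).1) -> valid_rle (mkseq h N).
Proof.
move=> Hp Hs; apply/andP; split.
  by apply/allP => p /mapP [j]; rewrite mem_iota => /andP [_ hj] ->; apply: Hp.
apply/(sortedP (h 0)) => j; rewrite size_mkseq => hj; rewrite !nth_mkseq //; first exact: Hs.
lia.
Qed.

Lemma decode_split bc br (h : nat -> bits bc * bits br) m :
  decode (mkseq h (m + 2)) =
  decode (mkseq h m) ++ nseq (bval (h m).2) (h m).1 ++ nseq (bval (h m.+1).2) (h m.+1).1.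
Proof.
by rewrite /decode /mkseq iotaD map_cat map_cat flatten_cat /= add0n cats0.
Qed.

Definition xb m (x : bvec m) (j : nat) : bool :=
  if (insub j : option 'I_m) is Some i then x i else false.

Lemma xb_val m (x : bvec m) (i : 'I_m) : xb x i = x i.
Proof. by rewrite /xb valK. Qed.

Lemma xb_flip m (x : bvec m) (i : 'I_m) (j : nat) : j != val i -> xb (flip x i) j = xb x j.
Proof.
rewrite /xb; case: insubP => [i' _ vi'|] //= ji.
rewrite /flip ffunE; case: eqP => // E; move: ji; by rewrite -vi' E eqxx.
Qed.

Definition LL n := (n - 2) + 2 * (n - 2)./2 + 1.

Definition finst n bc br (x : bvec (n - 2)) (sel : bool) (j : nat) : bits bc * bits br :=
  (enc bc (if j < n - 2 then odd j : nat else if j == n - 2 then (if sel then 3 else 2) else 4),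
   enc br (if j < n - 2 then 1 + 2 * xb x j else if j == n - 2 then 1 else LL n)).

Definition rrun n bc br (x : bvec (n - 2)) (j : nat) : bits bc * bits br :=
  (enc bc (odd j), enc br (1 + 2 * xb x j)).

Definition inst n bc br (x : bvec (n - 2)) (sel : bool) : rle_str bc br :=
  mkseq (@finst n bc br x sel) n.

Lemma LL_lt n : 4 <= n -> LL n < 2 * n.
Proof. rewrite /LL => h; have := leq_half_double (n - 2); lia. Qed.

Lemma half_le m : 2 * m./2 <= m.
Proof. by rewrite -[X in _ <= X](odd_double_half m) -muln2; lia. Qed.

Lemma size_inst n bc br (x : bvec (n - 2)) sel : size (inst bc br x sel) = n.
Proof. by rewrite size_mkseq. Qed.

Lemma valid_inst n bc br (x : bvec (n - 2)) sel :
  4 <= n -> 4 < 2 ^ bc -> 2 * n < 2 ^ br -> valid_rle (inst bc br x sel).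
Proof.
move=> hn hc hr; have hL := LL_lt hn; have L0 : 0 < LL n by rewrite /LL addn1.
apply: valid_mkseq => j hj; rewrite /finst /=.
  case: ifP => h1; first by rewrite bval_enc; lia.
  by case: ifP; rewrite bval_enc; lia.
apply: enc_neq.
- case: ifP => _; first by case: (odd j) => /=; lia.
  by case: ifP => _; [case: sel|]; lia.
- case: ifP => _; first by case: (odd j.+1) => /=; lia.
  by case: ifP => _; [case: sel|]; lia.
case: (ltnP j.+1 (n - 2)) => h1.
  by rewrite (ltnW h1); case: (odd j).
case: (ltnP j (n - 2)) => h2.
  have -> : j.+1 == n - 2 by lia.
  by case: sel; case: (odd j).
have -> : (j.+1 == n - 2) = false by lia.
have -> : j == n - 2 by lia.
by case: sel.
Qed.

Definition Rstr n bc br (x : bvec (n - 2)) : seq (bits bc) :=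
  decode (mkseq (@rrun n bc br x) (n - 2)).

Lemma decode_inst n bc br (x : bvec (n - 2)) sel :
  4 <= n -> 2 * n < 2 ^ br ->
  decode (inst bc br x sel) =
  Rstr bc br x ++ enc bc (if sel then 3 else 2) :: nseq (LL n) (enc bc 4).
Proof.
move=> hn hr; have hL := LL_lt hn.
have En : n = (n - 2) + 2 by lia.
rewrite /inst [X in mkseq _ X]En decode_split.
have -> : mkseq (finst bc br x sel) (n - 2) = mkseq (@rrun n bc br x) (n - 2).
  rewrite /mkseq; apply/eq_in_map => j; rewrite mem_iota => /andP [_ hj].
  by rewrite /finst /rrun add0n in hj *; rewrite hj.
rewrite /finst /= ltnn eqxx.
have -> : ((n - 2).+1 < n - 2) = false by lia.
have -> : ((n - 2).+1 == n - 2) = false by lia.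
rewrite !bval_enc; [|lia|lia].
by [].
Qed.

Lemma size_Rstr n bc br (x : bvec (n - 2)) :
  2 * n < 2 ^ br -> 4 <= n -> size (Rstr bc br x) = (n - 2) + 2 * wt x.
Proof.
move=> hr hn.
rewrite /Rstr /decode size_flatten /shape -!map_comp.
rewrite (@eq_map _ _ _ (fun j => 1 + 2 * xb x j)); last first.
  move=> j /=; rewrite size_nseq bval_enc //.
  by case: (xb x j); lia.
rewrite sumnE big_map (_ : iota 0 (n - 2) = index_iota 0 (n - 2)); last by rewrite /index_iota subn0.
rewrite big_mkord big_split /= sum1_card card_ord -big_distrr /=.
by congr (_ + 2 * _); apply: eq_bigr => i _; rewrite xb_val.
Qed.

Lemma notin_Rstr n bc br (x : bvec (n - 2)) v :
  4 < 2 ^ bc -> 2 <= v <= 4 -> enc bc v \notin Rstr bc br x.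
Proof.
move=> hc hv; apply/negP => /flattenP [s /mapP [p /mapP [j _ ->] ->]].
move/nseqP => [/eqP E _]; move: E; apply/negP; apply: enc_neq; try lia.
all: by case: (odd j).
Qed.

Lemma rle_Rstr n bc br (x : bvec (n - 2)) :
  4 < 2 ^ bc -> 2 * n < 2 ^ br -> 4 <= n -> size (rle (Rstr bc br x)) = n - 2.
Proof.
move=> hc hr hn; rewrite /Rstr rle_decode ?size_mkseq //.
apply: valid_mkseq => j hj; rewrite /rrun /=.
  by rewrite bval_enc; case: (xb x j); lia.
by apply: enc_neq; case: (odd j) => /=; lia.
Qed.

Lemma answer_inst n bc br (x : bvec (n - 2)) a :
  4 <= n -> 4 < 2 ^ bc -> 2 * n < 2 ^ br -> (n - 2) + 2 * wt x != LL n ->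
  ellcs_answer (inst bc br x false) (inst bc br x true) a <->
  a = if LL n < (n - 2) + 2 * wt x then n - 2 else 1.
Proof.
move=> hn hc hr hne.
rewrite /ellcs_answer !decode_inst //.
have eR : enc bc 2 \notin Rstr bc br x by apply: notin_Rstr.
have e23 : enc bc 2 != enc bc 3 by apply: enc_neq; lia.
have e24 : enc bc 2 != enc bc 4 by apply: enc_neq; lia.
have key := fun t => @lcs_char _ _ _ _ _ (LL n) t eR e23 e24.
rewrite size_Rstr // in key.
split.
  case=> t [HA HB Hm ->].
  have := (key t hne).1 (And3 HA HB Hm) => ->.
  case: ifP => _; first by rewrite rle_Rstr.
  have LL0 : 0 < LL n by rewrite /LL; lia.
  by case: (LL n) LL0 => // l _; rewrite -[nseq _ _]cats0 size_rle_nseq.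
move=> ->.
exists (if LL n < n - 2 + 2 * wt x then Rstr bc br x else nseq (LL n) (enc bc 4)).
have [HA HB Hm] := (key _ hne).2 erefl.
split => //.
case: ifP => _; first by rewrite rle_Rstr.
have LL0 : 0 < LL n by rewrite /LL; lia.
by case: (LL n) LL0 => // l _; rewrite -[nseq _ _]cats0 size_rle_nseq.
Qed.

Lemma bxorK b (c p : bits b) : bxor (bxor c p) p = c.
Proof. by apply/ffunP => j; rewrite !ffunE addbK. Qed.

Lemma oracle_invol n bc br w (A B : rle_str bc br) :
  involutive (@oracle_map n bc br w A B).
Proof. by case=> [[[[sel i] c] r] z]; rewrite /oracle_map /= !bxorK. Qed.

Definition qpos n bc br w (q : qbasis n bc br w) : nat := nat_of_ord q.1.1.1.2.

Lemma oracle_pos n bc br w (A B : rle_str bc br) q :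
  qpos (@oracle_map n bc br w A B q) = qpos q.
Proof. by case: q => [[[[sel i] c] r] z]. Qed.

Lemma oracle_loc n bc br w (x : bvec (n - 2)) (i : 'I_(n - 2)) (q : qbasis n bc br w) :
  qpos q != i ->
  oracle_map (inst bc br x false) (inst bc br x true) q =
  oracle_map (inst bc br (flip x i) false) (inst bc br (flip x i) true) q.
Proof.
case: q => [[[[sel j] c] r] z]; rewrite /qpos /= => ji.
have E : forall s, nth (bzero bc, bzero br) (inst bc br x s) j =
                   nth (bzero bc, bzero br) (inst bc br (flip x i) s) j.
  by move=> s; rewrite !nth_mkseq // /finst xb_flip.
by rewrite /oracle_map; case: sel; rewrite E.
Qed.

Lemma final_arith m k T :
  2 <= m -> 2 * k <= m -> m <= 2 * k + 1 ->
  (m - k) * k.+1 <= 18 * T * ((m - k) + k.+1) -> m + 2 <= 74 * T.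
Proof.
move=> m2 k1 k2 H.
have H1 : m * (m + 1) <= 4 * ((m - k) * k.+1).
  have a : m <= 2 * (m - k) by lia.
  have b : m + 1 <= 2 * k.+1 by lia.
  have := leq_mul a b; lia.
have H2 : (m - k) + k.+1 = m + 1 by lia.
rewrite H2 in H.
have H3 : m * (m + 1) <= (72 * T) * (m + 1) by lia.
rewrite leq_mul2r addn1 /= in H3.
lia.
Qed.

Theorem lemma8 :
  exists k c e N0 : nat,
  forall n bc br : nat, N0 <= n ->
    k * (trunc_log 2 n).+1 <= bc -> k * (trunc_log 2 n).+1 <= br ->
  forall (w T : nat) (psi0 : qvec (qbasis n bc br w))
         (U : nat -> qop (qbasis n bc br w)) (out : qbasis n bc br w -> nat),
    unit_vec psi0 -> (forall t, t <= T -> unitary (U t)) ->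
    solves_ellcs T psi0 U out ->
    n <= c * T * (trunc_log 2 n).+1 ^ e.
Proof.
exists 3, 74, 0, 4.
move=> n bc br hn hbc hbr w T psi0 U out hu hU hs.
rewrite expn0 muln1.
set l := trunc_log 2 n in hbc hbr.
have hP : n < 2 ^ l.+1 := trunc_log_ltn n (isT : 1 < 2).
have hc : 4 < 2 ^ bc.
  have : 2 ^ 3 <= 2 ^ bc by rewrite leq_pexp2l //; lia.
  lia.
have hr : 2 * n < 2 ^ br.
  have : 2 ^ (l.+1 + l.+1) <= 2 ^ br by rewrite leq_pexp2l //; lia.
  rewrite expnD => h.
  have : n * n < 2 ^ l.+1 * 2 ^ l.+1 by apply: ltn_mul.
  nia.
have m2 : 2 <= n - 2 by lia.
have hne0 : forall x : bvec (n - 2), wt x = (n - 2)./2 -> n - 2 + 2 * wt x != LL n.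
  by move=> x ->; rewrite /LL; lia.
have hne1 : forall x : bvec (n - 2), wt x = ((n - 2)./2).+1 -> n - 2 + 2 * wt x != LL n.
  by move=> x ->; rewrite /LL; lia.
have := @adversary (qbasis n bc br w) (n - 2) (n - 2)./2
  (fun x => oracle_map (inst bc br x false) (inst bc br x true)) (@qpos n bc br w)
  psi0 U T out (pred1 1) (pred1 (n - 2)).
move=> /(_ (fun x => oracle_invol _ _)) /(_ (fun x q => oracle_pos _ _ q)).
move=> /(_ (fun x i q h => oracle_loc x h)) /(_ hu hU).
move=> /(_ (fun a (h0 : a == 1) (h1 : a == n - 2) => ltac:(move: h0 h1 => /eqP -> /eqP; lia))).
move=> H.
have ad : (n - 2 - (n - 2)./2) * ((n - 2)./2).+1 <=
          18 * T * ((n - 2 - (n - 2)./2) + ((n - 2)./2).+1).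
  apply: H.
  - move=> x wx.
    apply: (hs (inst bc br x false) (inst bc br x true)).
    + exact: valid_inst.
    + exact: valid_inst.
    + exact: size_inst.
    + exact: size_inst.
    + move=> a; rewrite (@answer_inst n bc br x a hn hc hr (hne0 x wx)) /= wx.
      have -> : (LL n < n - 2 + 2 * (n - 2)./2) = false by rewrite /LL; lia.
      by split => [/eqP|->].
  - move=> x wx.
    apply: (hs (inst bc br x false) (inst bc br x true)).
    + exact: valid_inst.
    + exact: valid_inst.
    + exact: size_inst.
    + exact: size_inst.
    + move=> a; rewrite (@answer_inst n bc br x a hn hc hr (hne1 x wx)) /= wx.
      have -> : (LL n < n - 2 + 2 * ((n - 2)./2).+1) by rewrite /LL; lia.
      by split => [/eqP|->].
  - by have := half_le (n - 2); lia.
have k2 : n - 2 <= 2 * (n - 2)./2 + 1.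
  by rewrite -[X in X <= _](odd_double_half (n - 2)) -muln2; case: odd => /=; lia.
have := final_arith m2 (half_le (n - 2)) k2 ad.
lia.
Qed.
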